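(* Let $f:\mathbb{X}(N,k)\to\mathbb{R}$ be a monotone $k$-submodular function, let $\hat{\mathbf{x}}\in\mathcal{X}$, and let $\hat{\mathbf{S}}=(\hat S_1,\dots,\hat S_k)$ be an optimal solution of the defender's problem defining $\Phi_D(\hat{\mathbf{x}})$, so that $\Phi_D(\hat{\mathbf{x}})=f(\hat{\mathbf{S}})$. Then for every $\mathbf{x}\in\mathcal{X}$, $$\Phi_D(\mathbf{x})\;\ge\;\Phi_D(\hat{\mathbf{x}})-\sum_{q=1}^k\sum_{i\in\hat S_q}\rho_{q,i}(\boldsymbol{\emptyset})\,x_{q,i}.$$
   Context: Let $n,k$ be positive integers and $N=\{1,\dots,n\}$. $\mathbb{X}(N,k)$ denotes the set of $k$-tuples $\mathbf{S}=(S_1,\dots,S_k)$ of pairwise disjoint subsets of $N$; such a tuple is identified with $\mathbf{s}\in\{0,1\}^{kn}$ where $s_{q,i}=1$ iff $i\in S_q$. For $\mathbf{X},\mathbf{Y}\in\mathbb{X}(N,k)$ let $\mathbf{X}\sqcap\mathbf{Y}=(X_1\cap Y_1,\dots,X_k\cap Y_k)$ and $\mathbf{X}\sqcup\mathbf{Y}$ be the tuple whose $i$-th component is $(X_i\cup Y_i)\setminus\bigcup_{q\ne i}(X_q\cup Y_q)$. A function $f:\mathbb{X}(N,k)\to\mathbb{R}$ is $k$-submodular if $f(\mathbf{X})+f(\mathbf{Y})\ge f(\mathbf{X}\sqcap\mathbf{Y})+f(\mathbf{X}\sqcup\mathbf{Y})$ for all $\mathbf{X},\mathbf{Y}$, and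 monotone if $f(\mathbf{X})\le f(\mathbf{Y})$ whenever $X_q\subseteq Y_q$ for all $q$. $\boldsymbol{\emptyset}=(\emptyset,\dots,\emptyset)$. For $\mathbf{X}\in\mathbb{X}(N,k)$, $q\in\{1,\dots,k\}$ and $i\in N\setminus\bigcup_r X_r$, the marginal gain is $\rho_{q,i}(\mathbf{X})=f(X_1,\dots,X_{q-1},X_q\cup\{i\},X_{q+1},\dots,X_k)-f(\mathbf{X})$. Given nonnegative integer budgets $A_1,\dots,A_k$ and $D_1,\dots,D_k$, the attacker's feasible set is $\mathcal{X}=\{\mathbf{x}\in\{0,1\}^{kn}:\sum_{i=1}^n x_{q,i}\le A_q\ \forall q,\ \sum_{q=1}^k x_{q,i}\le 1\ \forall i\in N\}$, and $\Phi_D(\mathbf{x})=\max\{f(\mathbf{S}):\mathbf{S}\in\mathbb{X}(N,k),\ s_{q,i}\le 1-x_{q,i}\ \forall q,i,\ \sum_{i=1}^n s_{q,i}\le D_q\ \forall q\}$. *)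

(* Defs.v *)
From mathcomp Require Import all_boot all_order all_algebra.
Set Implicit Arguments. Unset Strict Implicit. Unset Printing Implicit Defensive.
Import Order.TTheory GRing.Theory Num.Theory.
Local Open Scope ring_scope.

(* N = 'I_n (elements 0..n-1 stand for 1..n), types 1..k are 'I_k.
   A k-tuple of subsets of N; X(N,k) is the set of such tuples whose
   components are pairwise disjoint. *)
Definition ktuple (n k : nat) := {ffun 'I_k -> {set 'I_n}}.

Definition pdisj (n k : nat) (X : ktuple n k) : bool :=
  [forall q : 'I_k, forall r : 'I_k, (q != r) ==> [disjoint X q & X r]].

Definition kmeet (n k : nat) (X Y : ktuple n k) : ktuple n k :=
  [ffun q => X q :&: Y q].

Definition kjoin (n k : nat) (X Y : ktuple n k) : ktuple n k :=
  [ffun q => (X q :|: Y q) :\: \bigcup_(r | r != q) (X r :|: Y r)].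

Definition kempty (n k : nat) : ktuple n k := [ffun _ => set0].

Definition kadd (n k : nat) (X : ktuple n k) (q : 'I_k) (i : 'I_n) : ktuple n k :=
  [ffun r => if r == q then i |: X r else X r].

Definition k_submodular (R : realFieldType) (n k : nat) (f : ktuple n k -> R) : Prop :=
  forall X Y, pdisj X -> pdisj Y -> f X + f Y >= f (kmeet X Y) + f (kjoin X Y).

Definition k_monotone (R : realFieldType) (n k : nat) (f : ktuple n k -> R) : Prop :=
  forall X Y, pdisj X -> pdisj Y -> (forall q, X q \subset Y q) -> f X <= f Y.

Definition rho (R : realFieldType) (n k : nat) (f : ktuple n k -> R)
  (q : 'I_k) (i : 'I_n) (X : ktuple n k) : R := f (kadd X q i) - f X.

(* attacker vector x in {0,1}^{kn}: x q i = true iff x_{q,i} = 1 *)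
Definition attack (n k : nat) := 'I_k -> 'I_n -> bool.

Definition attacker_feasible (n k : nat) (A : 'I_k -> nat) (x : attack n k) : Prop :=
  (forall q : 'I_k, (\sum_(i < n) (x q i : nat) <= A q)%N) /\
  (forall i : 'I_n, (\sum_(q < k) (x q i : nat) <= 1)%N).

(* defender feasibility of S against x (S identified with s in {0,1}^{kn}) *)
Definition defender_feasible (n k : nat) (D : 'I_k -> nat) (x : attack n k)
  (S : ktuple n k) : bool :=
  [&& pdisj S,
      [forall q : 'I_k, forall i : 'I_n, (i \in S q) ==> ~~ x q i] &
      [forall q : 'I_k, (#|S q| <= D q)%N]].

(* Phi_D(x) = max of f over defender-feasible S; the empty tuple is always
   feasible, so f(empty) is a valid (attained) default for the max. *)
Definition PhiD (R : realFieldType) (n k : nat) (f : ktuple n k -> R)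
  (D : 'I_k -> nat) (x : attack n k) : R :=
  \big[Order.max/f (kempty n k)]_(S : ktuple n k | defender_feasible D x S) f S.

(* Main.v *)
Require Import Defs.
From mathcomp Require Import all_boot all_order all_algebra.
From mathcomp Require Import zify ring lra.
Import Order.TTheory GRing.Theory Num.Theory.
Set Implicit Arguments. Unset Strict Implicit.
Local Open Scope ring_scope.

Lemma pdisjP n k (T : ktuple n k) s r j :
  pdisj T -> s != r -> j \in T s -> j \in T r -> False.
Proof.
move=> /forallP /(_ s) /forallP /(_ r) /implyP H ne js jr.
by rewrite (disjointFr (H ne) js) in jr.
Qed.

Lemma pdisj_sub n k (T U : ktuple n k) :
  pdisj T -> (forall q, U q \subset T q) -> pdisj U.
Proof.
move=> H sub; apply/forallP=> a; apply/forallP=> b; apply/implyP=> ne.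
have := forallP (forallP H a) b; rewrite ne /= => D.
exact: disjointW (sub a) (sub b) D.
Qed.

Lemma in_bigcupE n k (F : 'I_k -> {set 'I_n}) r j :
  (j \in \bigcup_(s | s != r) F s) = [exists s, (s != r) && (j \in F s)].
Proof.
apply/bigcupP/existsP => [[s ns js]|[s /andP[ns js]]]; exists s => //.
by rewrite ns.
Qed.

Lemma kaddE n k (X : ktuple n k) q i r :
  kadd X q i r = if r == q then i |: X r else X r.
Proof. by rewrite ffunE. Qed.
Lemma kemptyE n k r : kempty n k r = set0.
Proof. by rewrite ffunE. Qed.
Lemma kmeetE n k (X Y : ktuple n k) r : kmeet X Y r = X r :&: Y r.
Proof. by rewrite ffunE. Qed.
Lemma kjoinE n k (X Y : ktuple n k) r :
  kjoin X Y r = (X r :|: Y r) :\: \bigcup_(s | s != r) (X s :|: Y s).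
Proof. by rewrite ffunE. Qed.

Lemma dr (R : realFieldType) n k (f : ktuple n k -> R) (T : ktuple n k) q i :
  k_submodular f -> pdisj T -> (forall r, i \notin T r) ->
  f (kadd T q i) - f T <= rho f q i (kempty n k).
Proof.
move=> sm pT ni.
set Y := kadd (kempty n k) q i.
have pY : pdisj Y.
  apply/forallP=> a; apply/forallP=> b; apply/implyP=> ne.
  apply/pred0P=> j; rewrite /Y !ffunE /=.
  case: (a =P q) => [ea|_]; case: (b =P q) => [eb|_]; rewrite ?inE ?andbF ?in_set0 //.
  by move: ne; rewrite ea eb eqxx.
have Yr s j : (j \in Y s) = (s == q) && (j == i).
  by rewrite /Y kaddE kemptyE; case: (s == q); rewrite ?inE ?in_set0 ?orbF ?andbT ?andbF.
have eY : Y = kadd (kempty n k) q i by [].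
clearbody Y.
have hm : kmeet T Y = kempty n k.
  apply/ffunP=> r; rewrite kmeetE kemptyE; apply/setP=> j; rewrite inE in_set0 Yr.
  case: (r =P q) => [->|_]; rewrite ?inE ?in_set0 ?andbF ?orbF //.
  by case: (j =P i) => [->|_]; rewrite ?andbF // (negbTE (ni q)).
have hj : kjoin T Y = kadd T q i.
  apply/ffunP=> r; rewrite kjoinE kaddE; apply/setP=> j; rewrite !inE in_bigcupE.
  rewrite negb_exists Yr.
  apply/idP/idP.
  - move=> /andP[_ /orP[jr|/andP[/eqP-> /eqP->]]]; last by rewrite eqxx !inE eqxx.
    by case: (r == q); rewrite ?inE jr ?orbT.
  - move=> H.
    have jr : (j \in T r) || ((r == q) && (j == i)).
      by move: H; case: (r == q) => /=; rewrite ?inE ?orbF //; case/orP=> ->; rewrite ?orbT.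
    rewrite jr andbT; apply/forallP=> s; apply/negP=> /andP[ns].
    rewrite inE Yr => /orP[js|/andP[/eqP sq /eqP ji]].
    + case/orP: jr => [jr|/andP[/eqP rq /eqP ji]].
        exact: (pdisjP pT ns js jr).
      by move: js; rewrite ji (negbTE (ni s)).
    + case/orP: jr => [jr|/andP[/eqP rq _]].
        by move: jr; rewrite ji (negbTE (ni r)).
      by rewrite sq rq eqxx in ns.
have := sm T Y pT pY; rewrite hm hj /rho -eY.
move=> H; lra.
Qed.

Definition strip n k (x : attack n k) (T : ktuple n k) : ktuple n k :=
  [ffun q => T q :\: [set i | x q i]].
Definition gw (R : realFieldType) n k (f : ktuple n k -> R) (x : attack n k) (T : ktuple n k) : R :=
  \sum_(q < k) \sum_(i in T q) rho f q i (kempty n k) * (x q i)%:R.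
Definition sz n k (T : ktuple n k) := (\sum_(q < k) #|T q|)%N.

Lemma base (R : realFieldType) n k (f : ktuple n k -> R) (x : attack n k) (T : ktuple n k) :
  ~~ [exists q, exists i, (i \in T q) && x q i] -> f T - gw f x T <= f (strip x T).
Proof.
rewrite negb_exists => /forallP H.
have Hn q i : i \in T q -> x q i = false.
  move=> iT; have := H q; rewrite negb_exists => /forallP /(_ i); rewrite negb_and iT /=.
  by move/negbTE.
have -> : strip x T = T.
  apply/ffunP=> q; rewrite ffunE; apply/setP=> i; rewrite !inE.
  by case iT: (i \in T q); rewrite ?andbF // Hn.
have -> : gw f x T = 0.
  rewrite /gw big1 // => q _; rewrite big1 // => i iT.
  by rewrite Hn // mulr0.
by rewrite subr0.
Qed.

Lemma main (R : realFieldType) n k (f : ktuple n k -> R) (x : attack n k) :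
  k_submodular f -> forall m T, (sz T <= m)%N -> pdisj T ->
  f T - gw f x T <= f (strip x T).
Proof.
move=> sm; elim=> [|m IH] T hs pT;
  (case: (boolP [exists q, exists i, (i \in T q) && x q i]) => [|hn]; last exact: base);
  case/existsP=> q /existsP[i /andP[iT xi]].
- have : (0 < sz T)%N.
    rewrite /sz (bigD1 q) //= (cardsD1 i) iT; lia.
  lia.
set U : ktuple n k := [ffun r => if r == q then T q :\ i else T r].
have UE r : U r = if r == q then T q :\ i else T r by rewrite ffunE.
have sUT r : U r \subset T r.
  by rewrite UE; case: eqP => [->|_]; rewrite ?subsetDl ?subxx.
have pU : pdisj U := pdisj_sub pT sUT.
have TU : T = kadd U q i.
  apply/ffunP=> r; rewrite kaddE UE; case: eqP => [->|_] //.
  by rewrite ?eqxx setD1K.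
have niU r : i \notin U r.
  rewrite UE; case: eqP => [_|ne]; first by rewrite !inE eqxx.
  apply/negP=> iTr; apply: (pdisjP pT _ iTr iT); exact/eqP.
have szE : sz T = (sz U).+1.
  rewrite /sz (bigD1 q) //= [in RHS](bigD1 q) //= UE eqxx (cardsD1 i (T q)) iT.
  rewrite add1n addSn; congr (_ + _).+1.
  by apply: eq_bigr => r /negbTE rq; rewrite UE rq.
have sU : (sz U <= m)%N by move: hs; rewrite szE.
have stU : strip x U = strip x T.
  apply/ffunP=> r; rewrite !ffunE ?UE; case: eqP => [->|_] //.
  apply/setP=> j; rewrite !inE; case: eqP => [->|_] //=.
  by rewrite xi.
have gU : gw f x T = gw f x U + rho f q i (kempty n k).
  rewrite /gw (bigD1 q) //= [in RHS](bigD1 q) //= UE eqxx (big_setD1 _ iT) /= xi mulr1.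
  rewrite [in RHS](eq_bigr (fun r => \sum_(j in T r) rho f r j (kempty n k) * (x r j)%:R)).
    by rewrite -addrA addrC.
  by move=> r /negbTE rq; rewrite UE rq.
have := IH U sU pU; rewrite stU => HU.
have := dr q sm pU niU; rewrite -TU => Hd.
rewrite gU; lra.
Qed.

Theorem theorem1 (R : realFieldType) (n k : nat) (f : ktuple n k -> R)
  (A D : 'I_k -> nat) (xhat : attack n k) (Shat : ktuple n k) :
  k_submodular f -> k_monotone f ->
  attacker_feasible A xhat ->
  defender_feasible D xhat Shat ->
  PhiD f D xhat = f Shat ->
  forall x : attack n k, attacker_feasible A x ->
    PhiD f D x >= PhiD f D xhat
      - \sum_(q < k) \sum_(i in Shat q) rho f q i (kempty n k) * (x q i)%:R.
Proof.
move=> sm _ _ /and3P[pS _ /forallP cS] ->  x _.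
have sub q : strip x Shat q \subset Shat q by rewrite ffunE subsetDl.
have feas : defender_feasible D x (strip x Shat).
  apply/and3P; split.
  - exact: pdisj_sub pS sub.
  - apply/forallP=> q; apply/forallP=> i; apply/implyP.
    by rewrite ffunE !inE => /andP[].
  - apply/forallP=> q; apply: leq_trans (cS q).
    exact: subset_leq_card.
have H1 : f (strip x Shat) <= PhiD f D x.
  by rewrite /PhiD; apply: (le_bigmax_cond _ _ feas).
have H2 := main x sm (leqnn (sz Shat)) pS.
rewrite /gw in H2.
exact: le_trans H2 H1.
Qed.
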